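(* For every integer $q\ge2$, $S_q(q):=\sum_{l_1,l_2\in\mathbb Z}H_q(l_1,l_2,q)=0$.
   Context: $(z)_k=z(z+1)\cdots(z+k-1)$ denotes the rising factorial. For integers $l_1,l_2,k$ and $q\ge1$, \[ H_q(l_{1},l_{2},k)=\frac{(-1)^{l_1+l_2}\left(-\frac{1}{2}\right)_{l_1} \left(-\frac{1}{2}\right)_{l_2} \left(\frac{1}{2}\right)_{q-l_{1}} \left(\frac{1}{2}\right)_{q-l_{2}}}{(2q-l_{1}-l_{2}-k)!\,(l_{2}-l_{1}+k)!\,(l_{1}-l_{2}+k)!\,(l_{1}+l_{2}-k)!}, \] where Pochhammer symbols and factorials are expressed via the Gamma function, with $1/\Gamma$ vanishing at non-positive integers (so only finitely many terms are non-zero). *)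

(* Defs.v *)
From mathcomp Require Import all_boot all_order all_algebra.
Set Implicit Arguments. Unset Strict Implicit. Unset Printing Implicit Defensive.
Import Order.TTheory GRing.Theory Num.Theory.
Local Open Scope ring_scope.

(* Rising factorial (z)_k = Gamma(z+k)/Gamma(z) for an integer k.
   k = n >= 0 : z (z+1) ... (z+n-1);
   k = -(n+1) : Gamma(z-n-1)/Gamma(z) = 1/((z-1)(z-2)...(z-n-1)). *)
Definition rising (z : rat) (k : int) : rat :=
  match k with
  | Posz n => \prod_(i < n) (z + i%:R)
  | Negz n => (\prod_(i < n.+1) (z - (i.+1)%:R))^-1
  end.

(* 1/m! = 1/Gamma(m+1), which vanishes when m is a negative integer. *)
Definition invfact (m : int) : rat :=
  match m with
  | Posz n => (n`!)%:R^-1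
  | Negz _ => 0
  end.

Definition H (q l1 l2 k : int) : rat :=
  (-1) ^ (l1 + l2) * rising (-(1/2)) l1 * rising (-(1/2)) l2
  * rising (1/2) (q - l1) * rising (1/2) (q - l2)
  * invfact (2 * q - l1 - l2 - k) * invfact (l2 - l1 + k)
  * invfact (l1 - l2 + k) * invfact (l1 + l2 - k).

Definition zrange (N : nat) : seq int :=
  [seq (i%:Z - N%:Z) | i <- iota 0 (N.*2.+1)].

(* Main.v *)
Require Import Defs.
From mathcomp Require Import all_boot all_order all_algebra.
From mathcomp Require Import ring lra zify.
Import Order.TTheory GRing.Theory Num.Theory.
Local Open Scope ring_scope.

Definition F (i : nat) : rat :=
  rising (-(1/2)) i%:Z * rising (1/2) i%:Z * invfact (2 * i)%N%:Z.

Definition P (n : nat) : rat := \sum_(i < n.+1) F i * F (n - i).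

Lemma risingS z i : rising z (Posz i.+1) = rising z (Posz i) * (z + i%:R).
Proof. by rewrite /rising big_ord_recr. Qed.

Lemma invfactS2 i : invfact (Posz (2 * i.+1)) =
  invfact (Posz (2 * i)) * (2 * i%:R + 1)^-1 * (2 * i%:R + 2)^-1.
Proof.
rewrite /invfact (_ : (2 * i.+1 = (2 * i).+2)%N); last by lia.
have e1 : ((2*i).+1)%:R = 2 * i%:R + 1 :> rat by rewrite -natr1 natrM.
have e2 : ((2*i).+2)%:R = 2 * i%:R + 2 :> rat.
  by rewrite -addn2 natrD natrM.
rewrite !factS !natrM !invfM e1 e2; ring.
Qed.

Lemma Frec i : (i.+1)%:R * F i.+1 = (2 * i%:R - 1) / 8 * F i.
Proof.
rewrite /F !risingS invfactS2 -natr1.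
have h : 0 <= i%:R :> rat by apply: ler0n.
set a := rising _ _; set b := rising _ _; set c := invfact _.
field.
all: lra.
Qed.
Definition T (n : nat) : rat := \sum_(i < n.+1) i%:R * (F i * F (n - i)).

Lemma Tsym n : T n + T n = n%:R * P n.
Proof.
have E : T n = \sum_(i < n.+1) (n - i)%:R * (F i * F (n - i)).
  rewrite /T (reindex_inj rev_ord_inj) /=; apply: eq_bigr => i _.
  have hi : (i <= n)%N by rewrite -ltnS.
  rewrite subSS subKn // mulrC [F _ * _]mulrC mulrC; done.
rewrite {2}E /P -big_split mulr_sumr /=; apply: eq_bigr => i _.
have hi : (i <= n)%N by rewrite -ltnS.
by rewrite -mulrDl -natrD subnKC.
Qed.

Lemma Prec n : (n.+1)%:R * P n.+1 = (n%:R - 1) / 4 * P n.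
Proof.
have h1 : (n.+1)%:R * P n.+1 = T n.+1 + T n.+1 by rewrite Tsym.
have h2 : T n.+1 = \sum_(i < n.+1) (2 * i%:R - 1) / 8 * (F i * F (n - i)).
  rewrite /T big_ord_recl /= mul0r add0r; apply: eq_bigr => i _.
  by rewrite /bump /= add1n subSS mulrA Frec; ring.
have h3 : T n.+1 = (T n + T n - P n) / 8.
  rewrite h2 /T /P -big_split /= -sumrB mulr_suml; apply: eq_bigr => i _.
  by field.
apply: (etrans h1); rewrite h3 Tsym; by field.
Qed.

Lemma P0 n : (2 <= n)%N -> P n = 0.
Proof.
elim: n => [|n IH] //.
have := Prec n.
case: (ltngtP n 1) => [hn|hn|->] Hr hn2.
- lia.
- have := IH hn. move=> e. rewrite e mulr0 in Hr.
  move/eqP: Hr; rewrite mulf_eq0 pnatr_eq0 /=; by move/eqP.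
- have h : (2%:R : rat) * P 2 = 0 by rewrite Hr; ring.
  by move/eqP: h; rewrite mulf_eq0 pnatr_eq0 /= => /eqP.
Qed.

Lemma invfact0 m : m < 0 -> invfact m = 0.
Proof. by case: m. Qed.

Lemma invfact_0 : invfact 0 = 1.
Proof. by rewrite /invfact /= invr1. Qed.

Lemma supp q l1 l2 : H q l1 l2 q != 0 -> l1 + l2 = q /\ (0 <= l1 <= q).
Proof.
move=> Hne.
have h1 : 0 <= 2 * q - l1 - l2 - q.
  rewrite leNgt; apply/negP => /invfact0 E; move/eqP: Hne; apply.
  by rewrite /H E !(mulr0, mul0r).
have h2 : 0 <= l2 - l1 + q.
  rewrite leNgt; apply/negP => /invfact0 E; move/eqP: Hne; apply.
  by rewrite /H E !(mulr0, mul0r).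
have h3 : 0 <= l1 - l2 + q.
  rewrite leNgt; apply/negP => /invfact0 E; move/eqP: Hne; apply.
  by rewrite /H E !(mulr0, mul0r).
have h4 : 0 <= l1 + l2 - q.
  rewrite leNgt; apply/negP => /invfact0 E; move/eqP: Hne; apply.
  by rewrite /H E !(mulr0, mul0r).
split; [lia | apply/andP; split; lia].
Qed.

Lemma mem_zrange n (x : int) : - n%:Z <= x <= n%:Z -> x \in zrange n.
Proof.
move=> /andP [a b]; apply/mapP; exists (absz (x + n%:Z)).
  rewrite mem_iota; lia.
lia.
Qed.

Lemma uniq_zrange n : uniq (zrange n).
Proof.
rewrite map_inj_uniq ?iota_uniq // => a b h; lia.
Qed.

Lemma Hval n i : (i <= n)%N ->
  H n%:Z i%:Z (n%:Z - i%:Z) n%:Z = (-1) ^ (n%:Z) * (F i * F (n - i)).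
Proof.
move=> hi.
have e0 : n%:Z - i%:Z = (n - i)%N%:Z by lia.
rewrite e0 /H e0.
have -> : i%:Z + (n - i)%N%:Z = n%:Z by lia.
have -> : n%:Z - (n - i)%N%:Z = i%:Z by lia.
have -> : 2 * n%:Z - i%:Z - (n - i)%N%:Z - n%:Z = 0 by lia.
have -> : (n - i)%N%:Z - i%:Z + n%:Z = (2 * (n - i))%N%:Z by lia.
have -> : i%:Z - (n - i)%N%:Z + n%:Z = (2 * i)%N%:Z by lia.
rewrite subrr.
rewrite invfact_0 /F; ring.
Qed.

Theorem lemma7p4 (q : int) (hq : 2 <= q) :
  exists N : nat,
    (forall l1 l2 : int, H q l1 l2 q != 0 -> (`|l1| <= N%:Z) && (`|l2| <= N%:Z)) /\
    \sum_(l1 <- zrange N) \sum_(l2 <- zrange N) H q l1 l2 q = 0.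
Proof.
case: q hq => [n|n] hq //.
have hn : (2 <= n)%N by lia.
exists n; split.
  move=> l1 l2 /supp [e /andP [a b]]; apply/andP; split; lia.
have inner : forall l1, \sum_(l2 <- zrange n) H n l1 l2 n = H n l1 (n%:Z - l1) n.
  move=> l1; case: (eqVneq (H n l1 (n%:Z - l1) n) 0) => [E|Hne].
    rewrite E big1_seq // => l2 _.
    case: (eqVneq l2 (n%:Z - l1)) => [->//|ne].
    case: (eqVneq (H n l1 l2 n) 0) => // /supp [e _]; exfalso; move/eqP: ne; lia.
  have [e /andP [a b]] := @supp _ _ _ Hne.
  rewrite (bigD1_seq (n%:Z - l1)) /=; last exact: uniq_zrange.
    rewrite big1 ?addr0 // => l2 ne.
    case: (eqVneq (H n l1 l2 n) 0) => // /supp [e' _]; exfalso; move/eqP: ne; lia.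
  apply: mem_zrange; apply/andP; split; lia.
rewrite (eq_bigr _ (fun l1 _ => inner l1)) /zrange big_map.
rewrite (_ : n.*2.+1 = n + n.+1)%N; last by lia.
rewrite iotaD big_cat add0n.
rewrite big1_seq ?add0r; last first.
  move=> i; rewrite mem_iota => /andP [_ hi].
  case: (eqVneq (H n (i%:Z - n%:Z) (n%:Z - (i%:Z - n%:Z)) n) 0) => // /supp [_ /andP [a _]].
  exfalso; lia.
rewrite (_ : iota n n.+1 = [seq n + i | i <- iota 0 n.+1]%N); last by rewrite -iotaDl addn0.
rewrite big_map.
have -> : iota 0 n.+1 = index_iota 0 n.+1 by rewrite /index_iota subn0.
rewrite big_mkord.
rewrite (eq_bigr (fun i : 'I_n.+1 => (-1) ^ (n%:Z) * (F i * F (n - i)))); last first.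
  move=> i _.
  have hi : (i <= n)%N by rewrite -ltnS.
  rewrite (_ : (n + i)%N%:Z - n%:Z = i%:Z); last by lia.
  exact: Hval.
by rewrite -mulr_sumr -/(P n) P0 // mulr0.
Qed.
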